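(* Let $X$ be a finite two-wide poset and $f\colon X\to\mathbb R$ a Morse function on $X$. Then $f$ satisfies the Exclusion condition: for every regular (i.e. non-critical) point $x\in X$, exactly one of the following holds: (1) there exists exactly one $y\in X$ with $x\prec y$ and $f(x)\ge f(y)$; (2) there exists exactly one $w\in X$ with $w\prec x$ and $f(w)\ge f(x)$.
   Context: In a poset, write $a\prec b$ if $a<b$ and there is no $c$ with $a<c<b$. A poset $X$ is two-wide if for any $x,z,y$ with $x\prec z\prec y$ there is $z'\neq z$ with $x\prec z'\prec y$. A Morse function on a finite poset $X$ is a map $f\colon X\to\mathbb R$ such that for every $x\in X$, $\#\{y: x\prec y,\ f(x)\ge f(y)\}\le1$ and $\#\{w: w\prec x,\ f(w)\ge f(x)\}\le 1$. A point $x$ is critical if both these sets are empty; otherwise it is regular. *)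

(* Defs.v *)
From HB Require Import structures.
From mathcomp Require Import all_boot all_order all_algebra.
Set Implicit Arguments. Unset Strict Implicit. Unset Printing Implicit Defensive.
Import Order.TTheory GRing.Theory Num.Theory.

Local Open Scope order_scope.

Section Poset.
Variables (d : Order.disp_t) (X : finPOrderType d).

Definition covers (a b : X) : bool := (a < b) && [forall c : X, ~~ ((a < c) && (c < b))].

Definition two_wide : Prop :=
  forall x z y : X, covers x z -> covers z y ->
    exists z' : X, z' != z /\ covers x z' /\ covers z' y.

Variable R : realFieldType.
Variable f : X -> R.

Definition up_set (x : X) : {set X} := [set y | covers x y & (f y <= f x)%R].
Definition down_set (x : X) : {set X} := [set w | covers w x & (f x <= f w)%R].

Definition morse : Prop := forall x : X, #|up_set x| <= 1 /\ #|down_set x| <= 1.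

Definition critical (x : X) : Prop := up_set x = set0 /\ down_set x = set0.

Definition exclusion : Prop :=
  forall x : X, ~ critical x ->
    ((#|up_set x| == 1) (+) (#|down_set x| == 1))%B.
End Poset.

(* Main.v *)
Require Import Defs.
From HB Require Import structures.
From mathcomp Require Import all_boot all_order all_algebra.
Import Order.TTheory GRing.Theory Num.Theory.

Lemma card_le1_eq (T : finType) (A : {set T}) (a b : T) :
  #|A| <= 1 -> a \in A -> b \in A -> a = b.
Proof.
move=> hA ha hb; apply/eqP; apply/negPn/negP => hab.
have : #|[set a; b]| <= #|A|.
  by apply: subset_leq_card; apply/subsetP => z; rewrite !inE => /orP[]/eqP->.
by rewrite cards2 hab; move/leq_trans/(_ hA).
Qed.

Theorem mainTheorem5 (d : Order.disp_t) (X : finPOrderType d)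
  (R : realFieldType) (f : X -> R) :
  two_wide X -> morse f -> exclusion f.
Proof.
move=> tw mo x ncr.
have [hu hd] := mo x.
have {}hu : (#|up_set f x| <= 1)%N := hu.
have {}hd : (#|down_set f x| <= 1)%N := hd.
have both : ~ ((#|up_set f x| == 1) && (#|down_set f x| == 1)).
  case/andP => hu1 hd1.
  have [y hy] := cards1P hu1. have [w hw] := cards1P hd1.
  have yin : y \in up_set f x by rewrite hy inE.
  have win : w \in down_set f x by rewrite hw inE.
  move: yin win; rewrite !inE => /andP[cxy fyx] /andP[cwx fxw].
  have [x' [nx' [cwx' cx'y]]] := tw _ _ _ cwx cxy.
  have h1 : ~~ (f x' <= f w)%R.
    apply/negP => le; apply: (negP nx'); apply/eqP; have mw : (#|up_set f w| <= 1)%N := (mo w).1. apply: (@card_le1_eq _ (up_set f w) x' x mw); rewrite inE; apply/andP; split=> //.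
  have h2 : ~~ (f y <= f x')%R.
    apply/negP => le; apply: (negP nx'); apply/eqP; have my : (#|down_set f y| <= 1)%N := (mo y).2. apply: (@card_le1_eq _ (down_set f y) x' x my); rewrite inE; apply/andP; split=> //.
  rewrite -ltNge in h1; rewrite -ltNge in h2.
  have := lt_trans h1 h2.
  by rewrite ltNge (le_trans fyx fxw).
have Hu : (#|up_set f x| == 1) || (up_set f x == set0).
  by rewrite -cards_eq0; case: #|up_set f x| hu => [|[|]].
have Hd : (#|down_set f x| == 1) || (down_set f x == set0).
  by rewrite -cards_eq0; case: #|down_set f x| hd => [|[|]].
case/orP: Hu=> [hu'|/eqP hu']; case/orP: Hd=> [hd'|/eqP hd'].
- by exfalso; apply: both; rewrite hu' hd'.
- by rewrite hu' hd' cards0.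
- by rewrite hu' hd' cards0.
- by exfalso; apply: ncr.
Qed.
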